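(* Let $\alpha$ be a formula containing no points-to atom with $\mathcal P(\alpha)\subseteq\mathcal P_l$, and let $\alpha'$ be a decoration of $\alpha$. If $(s,h')\models_{\mathrm{dec}(\mathcal R)}\alpha'$ and $(s,h')\rhd_{\mathrm{id}}(s,h)$, then $(s,h)\models_{\mathcal R}\alpha$.
   Context: Separation logic: variables $\mathcal V$, constant $\bot$; formulas from $x\not\approx x'$, $x\approx x'$, $x\mapsto(t_1,\dots,t_k)$, $p(x_1,\dots,x_n)$, $*$, $\vee$, $\exists$. SID: finite set of rules $p(x_1,\dots,x_n)\Leftarrow\pi$ ($\pi$ quantifier-free separating conjunction of atoms), existential variables $\mathrm{fv}(\pi)\setminus\{x_1,\dots,x_n\}$; $\mathcal P(\phi)$: predicates reachable (reflexively) from those of $\phi$ through rule bodies. Locations $\mathcal L$ with $\ell_\bot$; stores $s$ map variables and $\bot$ to $\mathcal L$ with $\bot\in\mathrm{dom}(s)$, $s(x)=\ell_\bot$ iff $x=\bot$; heaps are finite partial maps $\mathcal L\to\mathcal L^k$ with $\ell_\bot\notin$ domain; $\models_{\mathcal R}$ standard SL semantics (predicate atoms via a rule and an extension of the store to its existential variables). Standing assumptions: $\mathcal R$ is an SID of progressing rules $p(x_1,\dots,x_n)\Leftarrow x_1\mapsto(y_1,\dots,y_\kappa)*\rho$ ($\rho$ free of points-to), part of an entailment problem $(\phi,\psi,\mathcal R)$; $\mathcal P_l=\mathcal P(\phi)$; $\vec w=(w_1,\dots,w_\nu)$, $\nu>0$, the free variables of $\phi,\psi$, not occurring in $\mathcal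 R$; stores considered contain $w_1,\dots,w_\nu$ in their domain; every rule of $\mathcal R$ has exactly $\mu$ existential variables. $\vec\bot$ ($\vec\ell_\bot$) is $\kappa+\nu+\mu$ copies of $\bot$ ($\ell_\bot$); $\mathsf{bot}$ is a unary predicate with single rule $\mathsf{bot}(x)\Leftarrow x\mapsto\vec\bot$, included in $\mathrm{dec}(\mathcal R)$. Decorations: for $p\in\mathcal P_l$ of arity $n$ and $X\subseteq\{1,\dots,n\}$, $p_X$ is a fresh predicate of arity $n+\nu$. A decoration of a formula $\alpha$ without points-to atoms with $\mathcal P(\alpha)\subseteq\mathcal P_l$ replaces each atom $q(y_1,\dots,y_m)$ by some $q_X(y_1,\dots,y_m,\vec w)$ with $X\subseteq\{1,\dots,m\}$ chosen per atom. $\mathrm{dec}(\mathcal R)$ is the set of rules $p_X(x_1,\dots,x_n,\vec w)\Leftarrow x_1\mapsto(y_1,\dots,y_\kappa,\vec w,z_1,\dots,z_\mu)\sigma*\rho'*\mathop{*}_{i\in I}\mathsf{bot}(z_i)$ where $p(x_1,\dots,x_n)\Leftarrow x_1\mapsto(y_1,\dots,y_\kappa)*\rho$ is in $\mathcal R$, $X\subseteq\{1,\dots,n\}$, $\{z_1,\dots,z_\mu\}$ is the set of its existential variables, $\sigma$ is a substitution with $\mathrm{dom}(\sigma)\subseteq\{z_1,\dots,z_\mu\}$, $\mathrm{img}(\sigma)\subseteq\{x_1,\dots,x_n,w_1,\dots,w_\nu,z_1,\dots,z_\mu\}$, $\rho'$ is a decoration of $\rho\sigma$, and $I\subseteq\{1,\dots,\mu\}$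 with $z_i\notin\mathrm{dom}(\sigma)$ for $i\in I$. Expansion: for $h:\mathcal L\to\mathcal L^\kappa$ and $h':\mathcal L\to\mathcal L^{\kappa+\nu+\mu}$, $(s,h')\rhd_{\mathrm{id}}(s,h)$ iff $h'=\mathrm{main}(h')\uplus\mathrm{aux}(h')$ with: $\mathrm{dom}(\mathrm{main}(h'))=\mathrm{dom}(h)$; for $\ell\in\mathrm{dom}(\mathrm{main}(h'))$, $h'(\ell)=(h(\ell),s(w_1),\dots,s(w_\nu),b_1,\dots,b_\mu)$ for some $b_i$; for $\ell\in\mathrm{dom}(\mathrm{aux}(h'))$, $h'(\ell)=\vec\ell_\bot$ and $\ell$ is among the last $\mu$ components of $h'(\ell')$ for some $\ell'\in\mathrm{dom}(\mathrm{main}(h'))$. *)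

(* Defs.v *)
From Stdlib Require List.
From mathcomp Require Import all_boot.
Set Implicit Arguments. Unset Strict Implicit. Unset Printing Implicit Defensive.

Inductive term (V : Type) := TVar of V | TBot.
Arguments TBot {V}. Arguments TVar {V}.

Inductive formula (V Pr : Type) :=
| FEq  of V & V
| FNeq of V & V
| FPto of V & seq (term V)
| FPred of Pr & seq V
| FSep of formula V Pr & formula V Pr
| FOr  of formula V Pr & formula V Pr
| FEx  of V & formula V Pr.
Arguments FEq {V Pr}. Arguments FNeq {V Pr}. Arguments FPto {V Pr}.
Arguments FPred {V Pr}. Arguments FSep {V Pr}. Arguments FOr {V Pr}.
Arguments FEx {V Pr}.

Section Syntax.
Context {V : eqType} {Pr : Type}.

Definition tfv (t : term V) : seq V := if t is TVar x then [:: x] else [::].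

Fixpoint fv (f : formula V Pr) : seq V :=
  match f with
  | FEq x y | FNeq x y => [:: x; y]
  | FPto x ts => x :: flatten (map tfv ts)
  | FPred _ xs => xs
  | FSep f g | FOr f g => fv f ++ fv g
  | FEx x f => [seq y <- fv f | y != x]
  end.

Fixpoint preds (f : formula V Pr) : seq Pr :=
  match f with
  | FPred p _ => [:: p]
  | FSep f g | FOr f g => preds f ++ preds g
  | FEx _ f => preds f
  | _ => [::]
  end.

Definition sepfold (f0 : formula V Pr) (l : seq (formula V Pr)) : formula V Pr :=
  foldl (fun f a => FSep f a) f0 l.

End Syntax.

Record grule (V Pr : Type) := GRule {
  gr_pred : Pr; gr_params : seq V; gr_body : formula V Pr }.

(* points-to-free atoms (the atoms of rho in a progressing rule) *)
Inductive patom (V P : Type) :=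
| AEq of V & V | ANeq of V & V | APred of P & seq V.
Arguments AEq {V P}. Arguments ANeq {V P}. Arguments APred {V P}.

Definition atomF {V P : Type} (a : patom V P) : formula V P :=
  match a with AEq x y => FEq x y | ANeq x y => FNeq x y | APred p xs => FPred p xs end.

(* progressing rule  p(x1,...,xn) <= x1 |-> (y1,...,y_kappa) * rho  *)
Record prule (V P : Type) := PRule {
  pr_pred : P;
  pr_root : V;
  pr_rest : seq V;
  pr_pto  : seq (term V);
  pr_rho  : seq (patom V P) (* rho, a separating conjunction of atoms without points-to *)
}.

Section Rules.
Context {V : eqType} {P : Type}.

Definition params (r : prule V P) : seq V := pr_root r :: pr_rest r.

Definition body (r : prule V P) : formula V P :=
  sepfold (FPto (pr_root r) (pr_pto r)) (map atomF (pr_rho r)).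

Definition to_grule (r : prule V P) : grule V P := GRule (pr_pred r) (params r) (body r).

Definition ex_vars (r : prule V P) : seq V :=
  undup [seq x <- fv (body r) | x \notin params r].

Definition origR (R : seq (prule V P)) : grule V P -> Prop :=
  fun g => exists2 r, List.In r R & g = to_grule r.

Inductive reach (R : seq (prule V P)) (phi : formula V P) : P -> Prop :=
| reach_base q : List.In q (preds phi) -> reach R phi q
| reach_step q' r q : reach R phi q' -> List.In r R -> pr_pred r = q' ->
                      List.In q (preds (body r)) -> reach R phi q.

End Rules.

Definition heap (L : Type) := L -> option (seq L).

Section Semantics.
Context {V L : eqType} {Pr : Type} (lbot : L).

Definition valid_store (s : V -> L) : Prop := forall x, s x <> lbot.

Definition teval (s : V -> L) (t : term V) : L :=
  if t is TVar x then s x else lbot.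

Definition upd (s : V -> L) (x : V) (v : L) : V -> L :=
  fun y => if y == x then v else s y.

Definition hdisj (h1 h2 : heap L) : Prop := forall l, h1 l = None \/ h2 l = None.
Definition hunion (h1 h2 : heap L) : heap L :=
  fun l => if h1 l is Some v then Some v else h2 l.
Definition hemp (h : heap L) : Prop := forall l, h l = None.

Inductive sat (Rules : grule V Pr -> Prop) : (V -> L) -> heap L -> formula V Pr -> Prop :=
| sat_eq s h x y : s x = s y -> hemp h -> sat Rules s h (FEq x y)
| sat_neq s h x y : s x <> s y -> hemp h -> sat Rules s h (FNeq x y)
| sat_pto s h x ts : h (s x) = Some (map (teval s) ts) ->
    (forall l, l != s x -> h l = None) -> sat Rules s h (FPto x ts)
| sat_pred s h p xs r s' : Rules r -> gr_pred r = p ->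
    size (gr_params r) = size xs -> valid_store s' ->
    (forall i x0, i < size xs -> s' (nth x0 (gr_params r) i) = s (nth x0 xs i)) ->
    sat Rules s' h (gr_body r) -> sat Rules s h (FPred p xs)
| sat_sep s h f g h1 h2 : hdisj h1 h2 -> (forall l, h l = hunion h1 h2 l) ->
    sat Rules s h1 f -> sat Rules s h2 g -> sat Rules s h (FSep f g)
| sat_orl s h f g : sat Rules s h f -> sat Rules s h (FOr f g)
| sat_orr s h f g : sat Rules s h g -> sat Rules s h (FOr f g)
| sat_ex s h x f v : v <> lbot -> sat Rules (upd s x v) h f -> sat Rules s h (FEx x f).

End Semantics.

(* decorated predicate symbols: bot, and p_X for p a predicate and X a subset
   of {1,...,n} (represented by a strictly increasing list) *)
Inductive dpred (P : Type) := DBot | DDec of P & seq nat.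
Arguments DBot {P}.

Definition subidx (n : nat) (X : seq nat) : Prop :=
  sorted ltn X /\ all (fun i => 0 < i <= n) X.

Section Decoration.
Context {V : eqType} {P : Type} (w : seq V).

(* There is no
   case for points-to atoms (decorations are only defined for formulas
   without points-to atoms). *)
Fixpoint decor (a : formula V P) (b : formula V (dpred P)) {struct a} : Prop :=
  match a, b with
  | FEq x y, FEq x' y' => x = x' /\ y = y'
  | FNeq x y, FNeq x' y' => x = x' /\ y = y'
  | FPred q ys, FPred (DDec q' X) ys' => q = q' /\ subidx (size ys) X /\ ys' = ys ++ w
  | FSep a1 a2, FSep b1 b2 => decor a1 b1 /\ decor a2 b2
  | FOr a1 a2, FOr b1 b2 => decor a1 b1 /\ decor a2 b2
  | FEx x a1, FEx x' b1 => x = x' /\ decor a1 b1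
  | _, _ => False
  end.

Fixpoint decor_list (l : seq (formula V P)) (l' : seq (formula V (dpred P))) : Prop :=
  match l, l' with
  | [::], [::] => True
  | a :: l, b :: l' => decor a b /\ decor_list l l'
  | _, _ => False
  end.

Definition tsubst (sigma : V -> V) (t : term V) : term V :=
  if t is TVar x then TVar (sigma x) else TBot.

Definition asubst (sigma : V -> V) (a : patom V P) : patom V P :=
  match a with
  | AEq x y => AEq (sigma x) (sigma y)
  | ANeq x y => ANeq (sigma x) (sigma y)
  | APred p xs => APred p (map sigma xs)
  end.

Definition bot_rule (kappa mu : nat) (x : V) : grule V (dpred P) :=
  GRule DBot [:: x] (FPto x (nseq (kappa + size w + mu) TBot)).

Definition decR (kappa mu : nat) (R : seq (prule V P)) (Pl : P -> Prop) :
    grule V (dpred P) -> Prop :=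
  fun g =>
    (exists x, g = bot_rule kappa mu x) \/
    exists r X zs (sigma : V -> V) (rho' : seq (formula V (dpred P))) Is,
      List.In r R /\ Pl (pr_pred r) /\ subidx (size (params r)) X /\
          (uniq zs /\ zs =i ex_vars r) /\
          ((forall x, x \notin zs -> sigma x = x) /\
          (forall z, z \in zs -> sigma z \in params r ++ w ++ zs)) /\
          decor_list [seq atomF (asubst sigma a) | a <- pr_rho r] rho' /\
          (subseq Is zs /\ (forall z, z \in Is -> sigma z = z)) /\
          g = GRule (DDec (pr_pred r) X) (params r ++ w)
                (sepfold
                   (FPto (pr_root r)
                      (map (tsubst sigma) (pr_pto r ++ map TVar w ++ map TVar zs)))
                   (rho' ++ [seq FPred DBot [:: z] | z <- Is])).

End Decoration.

Section Expansion.
Context {V L : eqType} (lbot : L) (kappa mu : nat) (w : seq V).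

Definition expands (s : V -> L) (h' h : heap L) : Prop :=
  exists main aux : heap L,
    [/\ hdisj main aux, (forall l, h' l = hunion main aux l),
        (forall l, main l = None <-> h l = None),
        (forall l v, h l = Some v ->
           exists bs, size bs = mu /\ main l = Some (v ++ map s w ++ bs)) &
        (forall l u, aux l = Some u ->
           u = nseq (kappa + size w + mu) lbot /\
           exists l' u', main l' = Some u' /\ l \in drop (size u' - mu) u')].

Definition finite_heap (h : heap L) : Prop :=
  exists dl : seq L, forall l, h l <> None -> l \in dl.

Definition wf_heap (k : nat) (h : heap L) : Prop :=
  [/\ finite_heap h, h lbot = None & forall l v, h l = Some v -> size v = k].

End Expansion.

Definition standing {V : eqType} {P : Type} (kappa mu : nat)
    (R : seq (prule V P)) (phi psi : formula V P) (w : seq V) : Prop :=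
  [/\
      (forall r, List.In r R -> size (pr_pto r) = kappa /\ uniq (params r)),
      (forall r, List.In r R -> size (ex_vars r) = mu),
      uniq w /\ 0 < size w,
      (forall r x, List.In r R -> x \in w -> x \notin params r /\ x \notin fv (body r)) &
      fv phi ++ fv psi =i w].

(* Main.v *)
Require Import Defs.
From Stdlib Require List.
From mathcomp Require Import all_boot.
Set Implicit Arguments. Unset Strict Implicit. Unset Printing Implicit Defensive.

Lemma sat_ext (V L : eqType) (Pr : Type) (lbot : L) (Rules : grule V Pr -> Prop)
  t g f : sat lbot Rules t g f -> forall g2, (forall l, g l = g2 l) -> sat lbot Rules t g2 f.
Proof.
elim=> {t g f}
 [s g x y Hxy Hemp | s g x y Hxy Hemp | s g x ts Hx Hoth | s g p xs r0 s1 Hr0 Hp Hsz Hv1 Hnth Hb IH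
 | s g f1 f2 g1 g2 Hd Hu H1 IH1 H2 IH2 | s g f1 f2 H1 IH1 | s g f1 f2 H1 IH1 | s g x f1 v Hv H1 IH1] g3 E.
- by apply: sat_eq => // l; rewrite -E.
- by apply: sat_neq => // l; rewrite -E.
- by apply: sat_pto => [|l Hl]; rewrite -E //; apply: Hoth.
- exact: (sat_pred Hr0 Hp Hsz Hv1 Hnth (IH _ E)).
- by apply: (sat_sep Hd _ H1 H2) => l; rewrite -E.
- exact: sat_orl (IH1 _ E).
- exact: sat_orr (IH1 _ E).
- exact: sat_ex Hv (IH1 _ E).
Qed.

Fixpoint fsubst (V : eqType) (Pr : Type) (sigma : V -> V) (f : formula V Pr) : formula V Pr :=
  match f with
  | FEq x y => FEq (sigma x) (sigma y)
  | FNeq x y => FNeq (sigma x) (sigma y)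
  | FPto x ts => FPto (sigma x) (map (tsubst sigma) ts)
  | FPred p xs => FPred p (map sigma xs)
  | FSep a b => FSep (fsubst sigma a) (fsubst sigma b)
  | FOr a b => FOr (fsubst sigma a) (fsubst sigma b)
  | FEx x a => FEx x a
  end.

Fixpoint noex (V : eqType) (Pr : Type) (f : formula V Pr) : bool :=
  match f with
  | FSep a b | FOr a b => noex a && noex b
  | FEx _ _ => false
  | _ => true
  end.

Lemma teval_subst (V L : eqType) (lbot : L) (t : V -> L) sigma u :
  teval lbot t (tsubst sigma u) = teval lbot (fun y => t (sigma y)) u.
Proof. by case: u. Qed.

Lemma sat_subst (V L : eqType) (Pr : Type) (lbot : L) (Rules : grule V Pr -> Prop) sigma
  (f : formula V Pr) : noex f -> forall t g, sat lbot Rules t g (fsubst sigma f) ->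
  sat lbot Rules (fun y => t (sigma y)) g f.
Proof.
elim: f => [x y|x y|x ts|p xs|a IHa b IHb|a IHa b IHb|x a IHa] //= Hn t g H.
- inversion H; subst; exact: sat_eq.
- inversion H; subst; exact: sat_neq.
- inversion H as [| |s0 h0 x0 ts0 Hc Ho| | | | |]; subst.
  apply: sat_pto => //.
  by rewrite Hc -map_comp; congr Some; apply: eq_map => u /=; rewrite teval_subst.
- inversion H as [| | |s0 h0 p0 xs0 r s' Hr Hp Hsz Hv Hnth Hb| | | |]; subst.
  apply: (sat_pred Hr erefl _ Hv _ Hb); first by rewrite Hsz size_map.
  move=> i x0 Hi; rewrite Hnth ?size_map // (nth_map x0) //.
- move/andP: Hn => [Ha Hb]; inversion H as [| | | |s0 h0 f0 g0 h1 h2 Hd Hu H1 H2| | |]; subst.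
  exact: (sat_sep Hd Hu (IHa Ha _ _ H1) (IHb Hb _ _ H2)).
- move/andP: Hn => [Ha Hb]; inversion H as [| | | | |s0 h0 f0 g0 H1|s0 h0 f0 g0 H1|]; subst.
  + exact: sat_orl (IHa Ha _ _ H1).
  + exact: sat_orr (IHb Hb _ _ H1).
Qed.

Lemma fsubst_sepfold (V : eqType) (Pr : Type) sigma (f0 : formula V Pr) l :
  fsubst sigma (sepfold f0 l) = sepfold (fsubst sigma f0) (map (fsubst sigma) l).
Proof. by elim: l f0 => //= a l IH f0; rewrite /sepfold /= -!/(sepfold _ _) IH. Qed.

Lemma noex_sepfold (V : eqType) (Pr : Type) (f0 : formula V Pr) l :
  noex (sepfold f0 l) = noex f0 && all (@noex V Pr) l.
Proof.
elim: l f0 => /= [|a l IH] f0; first by rewrite andbT.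
by rewrite /sepfold /= -!/(sepfold _ _) IH /= andbA.
Qed.

Lemma body_subst (V : eqType) (P : Type) sigma (r : prule V P) :
  fsubst sigma (body r) = sepfold (FPto (sigma (pr_root r)) (map (tsubst sigma) (pr_pto r)))
     [seq atomF (asubst sigma a) | a <- pr_rho r].
Proof.
rewrite /body fsubst_sepfold /= -map_comp; congr sepfold.
by apply: eq_map => -[].
Qed.

Lemma noex_body (V : eqType) (P : Type) (r : prule V P) : noex (body r).
Proof. rewrite /body noex_sepfold /= all_map; by elim: (pr_rho r) => //= -[]. Qed.

Inductive Rel (V : eqType) (P : Type) (w : seq V) (kappa : nat) :
   formula V P -> formula V (dpred P) -> Prop :=
| R_eq x y : Rel w kappa (FEq x y) (FEq x y)
| R_neq x y : Rel w kappa (FNeq x y) (FNeq x y)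
| R_pred q X ys : Rel w kappa (FPred q ys) (FPred (DDec q X) (ys ++ w))
| R_pto x ts bs : size ts = kappa -> Rel w kappa (FPto x ts) (FPto x (ts ++ map TVar w ++ bs))
| R_sep a1 a2 b1 b2 : Rel w kappa a1 b1 -> Rel w kappa a2 b2 ->
     Rel w kappa (FSep a1 a2) (FSep b1 b2)
| R_or a1 a2 b1 b2 : Rel w kappa a1 b1 -> Rel w kappa a2 b2 ->
     Rel w kappa (FOr a1 a2) (FOr b1 b2)
| R_ex x a b : Rel w kappa a b -> Rel w kappa (FEx x a) (FEx x b)
| R_botr a b z : Rel w kappa a b -> Rel w kappa a (FSep b (FPred DBot [:: z])).

Lemma decor_Rel (V : eqType) (P : Type) (w : seq V) kappa (a : formula V P) b :
  decor w a b -> Rel w kappa a b.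
Proof.
elim: a b => [x y|x y|x ts|q ys|a1 IH1 a2 IH2|a1 IH1 a2 IH2|x a IH]
  [x' y'|x' y'|x' ts'|[|q' X] ys'|b1 b2|b1 b2|x' b] //=.
- by move=> [-> ->]; apply: R_eq.
- by move=> [-> ->]; apply: R_neq.
- by move=> [-> [_ ->]]; apply: R_pred.
- by move=> [/IH1 H1 /IH2 H2]; apply: R_sep.
- by move=> [/IH1 H1 /IH2 H2]; apply: R_or.
- by move=> [-> /IH H]; apply: R_ex.
Qed.

Lemma Rel_sepfold (V : eqType) (P : Type) (w : seq V) kappa l l' :
  decor_list w l l' -> forall (f0 : formula V P) f0', Rel w kappa f0 f0' ->
  Rel w kappa (sepfold f0 l) (sepfold f0' l').
Proof.
elim: l l' => [|a l IH] [|b l'] //= [Hab Hl] f0 f0' H0.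
rewrite /sepfold /= -!/(sepfold _ _); apply: IH => //.
by apply: R_sep => //; apply: decor_Rel.
Qed.

Lemma Rel_bots (V : eqType) (P : Type) (w : seq V) kappa (Is : seq V) :
  forall (f : formula V P) g, Rel w kappa f g ->
  Rel w kappa f (sepfold g [seq FPred DBot [:: z] | z <- Is]).
Proof.
elim: Is => //= z Is IH f g H.
rewrite /sepfold /= -!/(sepfold _ _); apply: IH; exact: R_botr.
Qed.

Lemma cat_prefix (T : Type) (a b c d : seq T) : size a = size b -> a ++ c = b ++ d -> a = b.
Proof.
move=> Hs E; have := congr1 (take (size a)) E.
by rewrite take_size_cat // take_size_cat.
Qed.

Definition hproj (L : Type) (h g : heap L) : heap L :=
  fun l => if g l is Some _ then h l else None.

Lemma nseq_noW (V L : eqType) (lbot : L) (t : V -> L) (w : seq V) :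
  valid_store lbot t -> 0 < size w -> forall a c n, a ++ map t w ++ c <> nseq n lbot.
Proof.
move=> Ht; case: w => [//|x w'] _ a c n E.
have : t x \in nseq n lbot by rewrite -E mem_cat /= in_cons eqxx orbT.
by move/nseqP => [Hx _]; apply: (Ht x).
Qed.

Lemma tevalW (V L : eqType) (lbot : L) (t : V -> L) (w : seq V) :
  map (teval lbot t) (map TVar w) = map t w.
Proof. by rewrite -map_comp. Qed.

Lemma sepfold_cat (V : eqType) (Pr : Type) (f0 : formula V Pr) l1 l2 :
  sepfold f0 (l1 ++ l2) = sepfold (sepfold f0 l1) l2.
Proof. exact: foldl_cat. Qed.

Lemma main_lemma (V L : eqType) (P : Type) (lbot : L) kappa mu (R : seq (prule V P)) Pl
  (w : seq V) (h h' : heap L) (s0 : V -> L) :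
  0 < size w -> valid_store lbot s0 ->
  (forall r, List.In r R -> size (pr_pto r) = kappa) ->
  (forall r x, List.In r R -> x \in w -> x \notin fv (body r)) ->
  (forall l u, h' l = Some u -> match h l with
      | None => u = nseq (kappa + size w + mu) lbot
      | Some v => size v = kappa /\ exists rest, u = v ++ map s0 w ++ rest end) ->
  forall t g f', sat lbot (decR w kappa mu R Pl) t g f' ->
  valid_store lbot t -> (forall l u, g l = Some u -> h' l = Some u) ->
  forall f, Rel w kappa f f' -> sat lbot (origR R) t (hproj h g) f.
Proof.
move=> Hw0 Hs0 Hkap Hwfv Hh' t g f' Hsat.
elim: Hsat => {t g f'}
 [t g x y Hxy Hemp | t g x y Hxy Hemp | t g x ts Hx Hoth | t g p xs r0 s1 Hr0 Hp Hsz Hv1 Hnth Hb IH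
 | t g f1 f2 g1 g2 Hd Hu H1 IH1 H2 IH2 | t g f1 f2 H1 IH1 | t g f1 f2 H1 IH1 | t g x f1 v Hv H1 IH1]
 Ht Hsub f HR.
- inversion HR; subst; apply: sat_eq => // l; by rewrite /hproj Hemp.
- inversion HR; subst; apply: sat_neq => // l; by rewrite /hproj Hemp.
- inversion HR as [| | |x0 ts0 bs Hsz| | | |]; subst.
  apply: sat_pto => [|l Hl]; last by rewrite /hproj Hoth.
  rewrite /hproj Hx.
  have := Hh' _ _ (Hsub _ _ Hx).
  rewrite !map_cat tevalW.
  case: (h (t x)) => [v [Hv [rest E]] | E].
  + congr Some; symmetry; apply: (cat_prefix _ E); by rewrite Hv size_map.
  + by exfalso; apply: (nseq_noW Ht Hw0 E).
- inversion HR as [| |q X ys| | | | |]; subst.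
  case: Hr0 => [[x0 Er]|[r [X' [zs [sigma [rho' [Is [Hin [HPl [HX [[Huq Hzs]
      [[Hsid Hsimg] [Hdl [[HIs HIsid] Er]]]]]]]]]]]]]]; subst r0; first by [].
  have Hq : pr_pred r = q by inversion HR.
  have Hnz : forall x, x \in params r -> x \notin zs.
    by move=> x Hx; rewrite Hzs /ex_vars mem_undup mem_filter Hx.
  have Hwz : forall x, x \in w -> x \notin zs.
    move=> x Hx; rewrite Hzs /ex_vars mem_undup mem_filter; apply/negP => /andP [_ Hf].
    by move: (Hwfv r x Hin Hx); rewrite Hf.
  have Hsp : forall x, x \in params r -> sigma x = x by move=> x Hx; apply: Hsid; apply: Hnz.
  have HRel : Rel w kappa (fsubst sigma (body r))
     (sepfold (FPto (pr_root r)
                      (map (tsubst sigma) (pr_pto r ++ map TVar w ++ map TVar zs)))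
                   (rho' ++ [seq FPred DBot [:: z] | z <- Is])).
    rewrite body_subst sepfold_cat; apply: Rel_bots; apply: (Rel_sepfold Hdl).
    rewrite Hsp ?mem_head // !map_cat.
    have -> : map (tsubst sigma) (map TVar w) = map TVar w.
      rewrite -map_comp; apply/eq_in_map => x Hx /=; by rewrite Hsid // Hwz.
    by apply: R_pto; rewrite size_map Hkap.
  have Hs := sat_subst (noex_body r) (IH Hv1 Hsub _ HRel).
  have Hps : size (params r) = size ys.
    by move: Hsz => /=; rewrite !size_cat => E; apply/eqP; rewrite -(eqn_add2r (size w)) addSn E.

  apply: (sat_pred (r:=to_grule r) (s':=fun y => s1 (sigma y))) => //.
  + by exists r.
  + move=> i x0 Hi /=; rewrite Hsp; last by apply: mem_nth; rewrite Hps.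
    have := Hnth i x0; rewrite (_ : gr_params _ = params r ++ w) // !nth_cat Hps Hi; apply.
    by rewrite size_cat (leq_trans Hi) // leq_addr.
- inversion HR as [| | | |a1 a2 b1 b2 H1r H2r| | |a b z Hr]; subst.
  + apply: (sat_sep (h1:=hproj h g1) (h2:=hproj h g2)).
    * by move=> l; rewrite /hproj; case: (Hd l) => ->; auto.
    * move=> l; rewrite /hproj Hu /hunion.
      case E1: (g1 l) => [u|]; case E2: (g2 l) => [u'|] //=; last by case: (h l).
      by case: (Hd l); congruence.
    * apply: IH1 => // l u E; apply: Hsub; by rewrite Hu /hunion E.
    * apply: IH2 => // l u E; apply: Hsub; rewrite Hu /hunion.
      by case: (Hd l) => E1; [rewrite E1 | congruence].
  + inversion H2 as [| | |s1 h1 p1 xs1 r1 s' Hr1 Hp1 Hsz1 Hv1 Hnth1 Hb1| | | |]; subst.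
    case: Hr1 => [[x0 Er]|[r [X' [zs [sigma [rho' [Is [_ [_ [_ [_ [_ [_ [_ Er]]]]]]]]]]]]]];
      subst r1; last by [].
    simpl in Hb1.
    inversion Hb1 as [| |s2 h2 x2 ts2 Hc Ho| | | | |]; subst.
    have Hg2 : forall l u, g2 l = Some u -> h l = None.
      move=> l u E.
      have Eg : g l = Some u.
        by rewrite Hu /hunion; case: (Hd l) => E1; [rewrite E1 | congruence].
      have := Hh' _ _ (Hsub _ _ Eg).
      case: (h l) => // v [_ [rest Eu]].
      case: (eqVneq l (s' x0)) => [El|Nl]; last by rewrite Ho in E.
      subst l; rewrite Hc map_nseq in E; case: E => E.
      by exfalso; apply: (nseq_noW Hs0 Hw0 (a:=v) (c:=rest)); rewrite -Eu -E.
    apply: (sat_ext (IH1 Ht _ _ Hr)).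
    * move=> l u E; apply: Hsub; by rewrite Hu /hunion E.
    * move=> l; rewrite /hproj Hu /hunion; case E1: (g1 l) => //.
      by case E2: (g2 l) => [u|] //; rewrite (Hg2 _ _ E2).
- inversion HR as [| | | | |a1 a2 b1 b2 H1r H2r| |]; subst.
  exact: sat_orl (IH1 Ht Hsub _ H1r).
- inversion HR as [| | | | |a1 a2 b1 b2 H1r H2r| |]; subst.
  exact: sat_orr (IH1 Ht Hsub _ H2r).
- inversion HR as [| | | | | |x0 a b Hr|]; subst.
  apply: (sat_ex Hv); apply: IH1 => //.
  by move=> y; rewrite /upd; case: (y == x) => //; apply: Ht.
Qed.

Theorem mainTheorem18 (V L : eqType) (P : Type) (lbot : L) (kappa mu : nat)
    (R : seq (prule V P)) (phi psi : formula V P) (w : seq V)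
    (alpha : formula V P) (alpha' : formula V (dpred P))
    (s : V -> L) (h h' : heap L) :
  standing kappa mu R phi psi w ->
  (forall q, List.In q (preds alpha) -> reach R phi q) ->
  decor w alpha alpha' ->
  valid_store lbot s ->
  wf_heap lbot kappa h ->
  wf_heap lbot (kappa + size w + mu) h' ->
  sat lbot (decR w kappa mu R (reach R phi)) s h' alpha' ->
  expands lbot kappa mu w s h' h ->
  sat lbot (origR R) s h alpha.
Proof.
move=> [Hst1 Hst2 [Huw Hw0] Hst4 Hst5] _ Hdec Hs [_ _ Hhsz] _ Hsat
  [main [aux [Hd Hu Hmn Hmv Haux]]].
have Hh' : forall l u, h' l = Some u -> match h l with
      | None => u = nseq (kappa + size w + mu) lbot
      | Some v => size v = kappa /\ exists rest, u = v ++ map s w ++ rest end.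
  move=> l u E; rewrite Hu /hunion in E.
  case E2: (h l) => [v|].
  - have [bs [_ Em]] := Hmv l v E2; rewrite Em in E; case: E => <-.
    by split; [exact: Hhsz E2 | exists bs].
  - have Em : main l = None by apply/Hmn.
    rewrite Em in E; by have [-> _] := Haux l u E.
apply: (sat_ext (main_lemma (Pl := reach R phi) Hw0 Hs _ _ Hh' Hsat Hs _ (decor_Rel kappa Hdec))).
- by move=> r Hin; case: (Hst1 r Hin).
- by move=> r x Hin Hx; case: (Hst4 r x Hin Hx).
- by [].
- move=> l; rewrite /hproj; case E: (h l) => [v|]; last by case: (h' l).
  have [bs [_ Em]] := Hmv l v E; by rewrite Hu /hunion Em.
Qed.
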